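(* Let $(M_i)_{i\in I}$ be a family of objects of an abelian category $\mathcal{A}$. (1) Assume that the product $\prod_{i\in I} M_i$ exists and is a strongly self-Rickart object. Then $M_i$ is strongly $M_j$-Rickart for every $i,j\in I$. (2) Assume that the coproduct $\bigoplus_{i\in I} M_i$ exists and is a dual strongly self-Rickart object. Then $M_i$ is dual strongly $M_j$-Rickart for every $i,j\in I$.
   Context: A morphism $f:X\to Y$ is a section if $f'f=1_X$ for some $f'$, a retraction if $ff'=1_Y$ for some $f'$. A monomorphism $k:K\to X$ is fully invariant if for every $h:X\to X$ there is $\alpha:K\to K$ with $hk=k\alpha$; an epimorphism $c:X\to C$ is fully coinvariant if for every $h:X\to X$ there is $\gamma:C\to C$ with $ch=\gamma c$. For objects $M,N$: $N$ is strongly $M$-Rickart if the kernel of every morphism $f:M\to N$ is a fully invariant section; $N$ is dual strongly $M$-Rickart if the cokernel of every morphism $f:M\to N$ is a fully coinvariant retraction. An object is (dual) strongly self-Rickart if it is (dual) strongly Rickart relative to itself. *)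

(* Defs.v *)
From HB Require Import structures.
From mathcomp Require Import all_boot all_algebra.
Set Implicit Arguments. Unset Strict Implicit. Unset Printing Implicit Defensive.
Import GRing.Theory.
Local Open Scope ring_scope.

Record AbelianCategory := {
  Obj :> Type;
  Mor : Obj -> Obj -> zmodType;
  comp : forall X Y Z : Obj, Mor Y Z -> Mor X Y -> Mor X Z;
  idm : forall X : Obj, Mor X X;
  compA : forall (W X Y Z : Obj) (h : Mor Y Z) (g : Mor X Y) (f : Mor W X),
      comp h (comp g f) = comp (comp h g) f;
  comp1m : forall (X Y : Obj) (f : Mor X Y), comp (idm Y) f = f;
  compm1 : forall (X Y : Obj) (f : Mor X Y), comp f (idm X) = f;
  compDl : forall (X Y Z : Obj) (g1 g2 : Mor Y Z) (f : Mor X Y),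
      comp (g1 + g2) f = comp g1 f + comp g2 f;
  compDr : forall (X Y Z : Obj) (g : Mor Y Z) (f1 f2 : Mor X Y),
      comp g (f1 + f2) = comp g f1 + comp g f2;
  zero_obj : exists Z : Obj, idm Z = 0;
  biprod : forall X Y : Obj, exists (P : Obj) (i1 : Mor X P) (i2 : Mor Y P)
      (p1 : Mor P X) (p2 : Mor P Y),
      [/\ comp p1 i1 = idm X, comp p2 i2 = idm Y, comp p1 i2 = 0,
          comp p2 i1 = 0 & comp i1 p1 + comp i2 p2 = idm P];
  has_kernels : forall (X Y : Obj) (f : Mor X Y),
      exists (K : Obj) (k : Mor K X), comp f k = 0 /\
        forall (W : Obj) (g : Mor W X), comp f g = 0 ->
          exists! u : Mor W K, comp k u = g;
  has_cokernels : forall (X Y : Obj) (f : Mor X Y),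
      exists (C : Obj) (c : Mor Y C), comp c f = 0 /\
        forall (W : Obj) (g : Mor Y W), comp g f = 0 ->
          exists! u : Mor C W, comp u c = g;
  mono_is_kernel : forall (X Y : Obj) (m : Mor X Y),
      (forall (W : Obj) (g h : Mor W X), comp m g = comp m h -> g = h) ->
      exists (Z : Obj) (f : Mor Y Z), comp f m = 0 /\
        forall (W : Obj) (g : Mor W Y), comp f g = 0 ->
          exists! u : Mor W X, comp m u = g;
  epi_is_cokernel : forall (X Y : Obj) (e : Mor X Y),
      (forall (W : Obj) (g h : Mor Y W), comp g e = comp h e -> g = h) ->
      exists (Z : Obj) (f : Mor Z X), comp e f = 0 /\
        forall (W : Obj) (g : Mor X W), comp g f = 0 ->
          exists! u : Mor Y W, comp u e = g
}.

Arguments comp {a X Y Z} g f.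
Arguments idm {a} X.

Section Defs.
Variable A : AbelianCategory.

Definition is_mono (X Y : A) (m : Mor X Y) : Prop :=
  forall (W : A) (g h : Mor W X), comp m g = comp m h -> g = h.

Definition is_epi (X Y : A) (e : Mor X Y) : Prop :=
  forall (W : A) (g h : Mor Y W), comp g e = comp h e -> g = h.

Definition is_section (X Y : A) (f : Mor X Y) : Prop :=
  exists f' : Mor Y X, comp f' f = idm X.

Definition is_retraction (X Y : A) (f : Mor X Y) : Prop :=
  exists f' : Mor Y X, comp f f' = idm Y.

Definition is_kernel (X Y K : A) (f : Mor X Y) (k : Mor K X) : Prop :=
  comp f k = 0 /\
  forall (W : A) (g : Mor W X), comp f g = 0 -> exists! u : Mor W K, comp k u = g.

Definition is_cokernel (X Y C : A) (f : Mor X Y) (c : Mor Y C) : Prop :=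
  comp c f = 0 /\
  forall (W : A) (g : Mor Y W), comp g f = 0 -> exists! u : Mor C W, comp u c = g.

Definition fully_invariant (K X : A) (k : Mor K X) : Prop :=
  is_mono k /\ forall h : Mor X X, exists alpha : Mor K K, comp h k = comp k alpha.

Definition fully_coinvariant (X C : A) (c : Mor X C) : Prop :=
  is_epi c /\ forall h : Mor X X, exists gamma : Mor C C, comp c h = comp gamma c.

(** [N] is strongly [M]-Rickart. *)
Definition strongly_rickart (M N : A) : Prop :=
  forall (f : Mor M N) (K : A) (k : Mor K M),
    is_kernel f k -> fully_invariant k /\ is_section k.

(** [N] is dual strongly [M]-Rickart. *)
Definition dual_strongly_rickart (M N : A) : Prop :=
  forall (f : Mor M N) (C : A) (c : Mor N C),
    is_cokernel f c -> fully_coinvariant c /\ is_retraction c.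

Definition strongly_self_rickart (M : A) : Prop := strongly_rickart M M.
Definition dual_strongly_self_rickart (M : A) : Prop := dual_strongly_rickart M M.

Definition is_product (I : Type) (Mi : I -> A) (P : A) (p : forall i, Mor P (Mi i)) : Prop :=
  forall (W : A) (g : forall i, Mor W (Mi i)),
    exists! u : Mor W P, forall i, comp (p i) u = g i.

Definition is_coproduct (I : Type) (Mi : I -> A) (S : A) (e : forall i, Mor (Mi i) S) : Prop :=
  forall (W : A) (g : forall i, Mor (Mi i) W),
    exists! u : Mor S W, forall i, comp u (e i) = g i.

End Defs.

Arguments is_product {A I} Mi P p.
Arguments is_coproduct {A I} Mi S e.

(* Main.v *)
Require Import Defs.
From mathcomp Require Import all_boot all_algebra.
From Stdlib Require Import ClassicalEpsilon ProofIrrelevance.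
Import GRing.Theory.
Local Open Scope ring_scope.
Local Notation comp := Defs.comp.
Local Notation compA := Defs.compA.
Local Notation comp1m := Defs.comp1m.
Local Notation compm1 := Defs.compm1.

Section Aux.
Variable A : AbelianCategory.

Lemma comp_m0 (X Y Z : A) (g : Mor Y Z) : comp g (0 : Mor X Y) = 0.
Proof.
have := compDr g (0 : Mor X Y) 0; rewrite addr0 => H.
by apply/eqP; rewrite -(inj_eq (addrI (comp g 0))) addr0 -{1}H.
Qed.

Lemma comp_0m (X Y Z : A) (f : Mor X Y) : comp (0 : Mor Y Z) f = 0.
Proof.
have := compDl (0 : Mor Y Z) 0 f; rewrite addr0 => H.
by apply/eqP; rewrite -(inj_eq (addrI (comp 0 f))) addr0 -{1}H.
Qed.

Variable I : Type.
Variable M : I -> A.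

Definition delta (i l : I) : Mor (M i) (M l) :=
  match excluded_middle_informative (i = l) with
  | left e => eq_rect i (fun l => Mor (M i) (M l)) (idm (M i)) l e
  | right _ => 0
  end.

Lemma delta_id i : delta i i = idm (M i).
Proof.
rewrite /delta; case: excluded_middle_informative => [e|n]; last by case: n.
by rewrite (proof_irrelevance _ e erefl).
Qed.
End Aux.

Theorem proposition3p4 (A : AbelianCategory) (I : Type) (M : I -> A) :
  (forall (P : A) (p : forall i, Mor P (M i)),
     is_product M P p -> strongly_self_rickart P ->
     forall i j : I, strongly_rickart (M j) (M i)) /\
  (forall (S : A) (e : forall i, Mor (M i) S),
     is_coproduct M S e -> dual_strongly_self_rickart S ->
     forall i j : I, dual_strongly_rickart (M j) (M i)).
Proof.
split.
- move=> P p Hprod Hssr i j f K k [kf kuniv].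
  have [ei [Hei _]] := Hprod (M i) (@delta A I M i).
  have [ej [Hej _]] := Hprod (M j) (@delta A I M j).
  have pei : comp (p i) ei = idm _ by rewrite Hei (@delta_id A I M).
  have pej : comp (p j) ej = idm _ by rewrite Hej (@delta_id A I M).
  pose F := comp ei (comp f (p j)).
  have [K' [L [FL Luniv]]] := has_kernels F.
  have [[Lmono Linv] [rho Hrho]] := Hssr F K' L (conj FL Luniv).
  have kmono : is_mono k.
    move=> W g h e.
    have [|u [_ Hu]] := kuniv W (comp k g); first by rewrite compA kf comp_0m.
    by rewrite -(Hu g erefl) (Hu h (esym e)).
  have Fek : comp F (comp ej k) = 0.
    by rewrite /F -!compA (compA (p j)) pej comp1m kf comp_m0.
  have [u [Lu _]] := Luniv _ _ Fek.
  split; first split => //.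
  + move=> h.
    have [beta Hb] := Linv (comp ej (comp h (p j))).
    suff fhk : comp f (comp h k) = 0.
      by have [a [Ha _]] := kuniv _ _ fhk; exists a.
    have : comp (p i) (comp F (comp (comp ej (comp h (p j))) (comp ej k))) = 0.
      by rewrite -Lu (compA (comp ej (comp h (p j)))) Hb -(compA L) (compA F) FL comp_0m !comp_m0.
    by rewrite /F -!compA (compA (p i)) pei comp1m (compA (p j) ej) pej comp1m
       (compA (p j) ej) pej comp1m compA.
  + have fpL : comp f (comp (p j) L) = 0.
      have := @comp_m0 A K' P (M i) (p i).
      by rewrite -{1}FL /F -!compA (compA (p i)) pei comp1m.
    have [v [Hv _]] := kuniv _ _ fpL.
    exists (comp v (comp rho ej)).
    apply: kmono.
    by rewrite compm1 -!compA -Lu (compA rho) Hrho comp1m (compA k) Hv -compA Lu compA pej comp1m.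
- move=> S e Hcop Hdsr i j f C c [cf cuniv].
  have [qi [Hqi _]] := Hcop (M i) (fun l => @delta A I M l i).
  have [qj [Hqj _]] := Hcop (M j) (fun l => @delta A I M l j).
  have qei : comp qi (e i) = idm _ by rewrite Hqi (@delta_id A I M).
  have qej : comp qj (e j) = idm _ by rewrite Hqj (@delta_id A I M).
  pose F := comp (e i) (comp f qj).
  have [C' [c' [Fc cuniv']]] := has_cokernels F.
  have [[cepi' cinv] [rho Hrho]] := Hdsr F C' c' (conj Fc cuniv').
  have cepi : is_epi c.
    move=> W g h E.
    have [|u [_ Hu]] := cuniv W (comp g c); first by rewrite -compA cf comp_m0.
    by rewrite -(Hu g erefl) (Hu h (esym E)).
  have cqF : comp (comp c qi) F = 0.
    by rewrite /F !compA -(compA c) qei compm1 cf !comp_0m.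
  have cef : comp (comp c' (e i)) f = 0.
    have := @comp_0m A (M j) S C' (e j).
    by rewrite -{1}Fc /F !compA -compA qej compm1.
  have FE : F = comp (e i) (comp f qj) by [].
  clearbody F.
  have [u [Hu _]] := cuniv' _ _ cqF.
  split; first split => //.
  + move=> h.
    have [beta Hb] := cinv (comp (e i) (comp h qi)).
    suff chf : comp (comp c h) f = 0.
      by have [a [Ha _]] := cuniv _ _ chf; exists a.
    have : comp (comp (comp (comp c qi) (comp (e i) (comp h qi))) F) (e j) = 0.
      by rewrite -Hu -(compA u) Hb -!compA (compA c') Fc comp_0m !comp_m0.
    rewrite FE !compA -(compA c) qei compm1 -(compA (comp c h)) qei compm1.
    by rewrite -(compA _ qj) qej compm1.
  + have [v [Hv _]] := cuniv _ _ cef.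
    exists (comp qi (comp rho v)).
    apply: cepi.
    rewrite comp1m !compA -Hu -(compA u c' rho) Hrho compm1 -(compA u v c) Hv.
    by rewrite compA Hu -compA qei compm1.
Qed.
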